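(* Let $k,\ell$ be positive integers. For integers $0\le j\le k$ define $$\left\langle \begin{matrix} k \\ j \end{matrix} \right\rangle (x, s, q, \ell) = \frac{\prod_{i=1}^k f(i\ell, x, s)}{\prod_{i=1}^j f(i\ell, x, q^{(j-i)\ell}s) \prod_{i=1}^{k-j} f(i\ell, x, q^{j\ell}s)}.$$ Then for all $n\in\mathbb{Z}$, $$\sum_{j=0}^{k+1} (-1)^{j+\ell \binom{j}{2}} \left( q^{\frac{(4j+1)\ell-3}{6}} s \right)^{\ell\binom{j}{2}} \left\langle \begin{matrix} k+1 \\ j \end{matrix} \right\rangle (x, s, q, \ell)\, f(n - j\ell, x, q^{j\ell} s)^k = 0.$$
   Context: Let $x,s,q$ be indeterminates; all quantities live in the field of rational functions in $x,s,q$. The Carlitz $q$-Fibonacci polynomials $f(n,x,s)$ are defined by $f(0,x,s)=0$, $f(1,x,s)=1$ and $f(n, x, s) = x f(n-1, x, s) + q^{n-2} s f(n-2, x, s)$; this recurrence is required to hold for all $n\in\mathbb{Z}$, which uniquely extends $f(n,x,s)$ to negative $n$. Here $f(n,x,q^a s)$ means $f(n,x,s)$ with $s$ replaced by $q^a s$. *)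

(* Defs.v *)
From HB Require Import structures.
From mathcomp Require Import all_boot all_order all_algebra.
From mathcomp Require Import fraction.
Set Implicit Arguments. Unset Strict Implicit. Unset Printing Implicit Defensive.
Import Order.TTheory GRing.Theory Num.Theory.
Local Open Scope ring_scope.

Section CFib.
Variable F : fieldType.
Variables q x s : F.

(* pospair m = (f m, f (m+1)) *)
Fixpoint cfib_pos (m : nat) : F * F :=
  match m with
  | 0%N => (0, 1)
  | m'.+1 => let: (a, b) := cfib_pos m' in (b, x * b + q ^+ m' * s * a)
  end.

(* cfib_neg m = (f (1-m), f (-m)), using f(n-2) = (f n - x f(n-1)) / (q^(n-2) s) *)
Fixpoint cfib_neg (m : nat) : F * F :=
  match m with
  | 0%N => (1, 0)
  | m'.+1 => let: (a, b) := cfib_neg m' in (b, (a - x * b) / (q ^ (Negz m') * s))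
  end.

Definition cfib (n : int) : F :=
  match n with
  | Posz m => (cfib_pos m).1
  | Negz m => (cfib_neg m.+1).2
  end.
End CFib.

(* The field of rational functions in x, s, q over the rationals:
   fractions of {poly {poly {poly rat}}}. *)
Definition R3 := {poly {poly {poly rat}}}.
Definition QF := {fraction R3}.
Definition Xx : QF := @FracField.tofrac R3 (('X : {poly rat})%:P)%:P.
Definition Xs : QF := @FracField.tofrac R3 ('X : {poly {poly rat}})%:P.
Definition Xq : QF := @FracField.tofrac R3 'X.

Definition f (n : int) (s' : QF) : QF := cfib Xq Xx s' n.

Definition qbrack (k j l : nat) : QF :=
  (\prod_(1 <= i < k.+1) f (i * l)%N Xs) /
  ((\prod_(1 <= i < j.+1) f (i * l)%N (Xq ^+ ((j - i) * l) * Xs)) *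
   (\prod_(1 <= i < (k - j).+1) f (i * l)%N (Xq ^+ (j * l) * Xs))).

(* exponent of q in (q^(((4j+1)l-3)/6) s)^(l*C(j,2)); it is an integer
   (exact division; truncated subtraction only matters when C(j,2)=0). *)
Definition qexp (j l : nat) : nat := ((((4 * j + 1) * l - 3) * (l * 'C(j, 2))) %/ 6)%N.

(* Main.v *)
Require Import Defs.
From HB Require Import structures.
From mathcomp Require Import all_boot all_order all_algebra.
From mathcomp Require Import fraction.
From mathcomp Require Import ring lra zify.
Set Implicit Arguments. Unset Strict Implicit.
Import Order.TTheory GRing.Theory Num.Theory.
Local Open Scope ring_scope.

Section Gen.
Variables (F : fieldType) (q x s : F).
Hypotheses (hq : q != 0) (hs : s != 0).
Notation cf := (cfib q x s).

Lemma cfP m : cf (Posz m.+2) = x * cf (Posz m.+1) + q ^+ m * s * cf (Posz m).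
Proof.
rewrite /cfib /=; case: (cfib_pos q x s m) => a b /=; done.
Qed.

Lemma cfN1 m : (cfib_neg q x s m).2 = cf (- (Posz m)).
Proof.
case: m => [|m] //=; rewrite -NegzE //.
Qed.

Lemma cfN0 m : (cfib_neg q x s m).1 = cf (1 - Posz m).
Proof.
case: m => [|m] //=.
rewrite /=; case E: (cfib_neg q x s m) => [a b] /=.
have := cfN1 m; rewrite E /= => ->; congr cf.
lia.
Qed.

Lemma cfNrec m : cf (1 - Posz m) = x * cf (- Posz m) + q ^ (Negz m) * s * cf (Negz m).
Proof.
have e : cf (Negz m) = (cfib_neg q x s m.+1).2 by [].
rewrite e /=; case E: (cfib_neg q x s m) => [a b] /=.
have ha := cfN0 m; have hb := cfN1 m; rewrite E /= in ha hb.
rewrite -ha -hb.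
have hc : q ^ (Negz m) * s != 0 by rewrite mulf_neq0 // expfz_neq0.
by rewrite [_ * ((_ - _) / _)]mulrC divfK // addrC subrK.
Qed.

Lemma cfib_rec (n : int) : cf n = x * cf (n - 1) + q ^ (n - 2) * s * cf (n - 2).
Proof.
case: n => [[|[|m]]|m].
- have := cfNrec 1. have -> : (1 - Posz 1 = 0 :> int)%R by []. move=> ->. done.
- have := cfNrec 0. have -> : (1 - Posz 0 = 1 :> int)%R by []. move=> ->. done.
- rewrite cfP.
  have -> : (Posz m.+2 - 1 = Posz m.+1)%R by lia.
  have -> : (Posz m.+2 - 2 = Posz m)%R by lia.
  done.
- have := cfNrec m.+2.
  have -> : (1 - Posz m.+2 = Negz m)%R by lia.
  have -> : (Negz m - 1 = - Posz m.+2)%R by lia.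
  have -> : (Negz m - 2 = Negz m.+2)%R by lia.
  done.
Qed.
End Gen.

Section Sol.
Variables (F : fieldType) (q x s : F).
Hypotheses (hq : q != 0) (hs : s != 0).

Definition sol (h : int -> F) :=
  forall n : int, h n = x * h (n - 1) + q ^ (n - 2) * s * h (n - 2).

Lemma solP h : sol h -> forall m : nat,
  h (Posz m.+2) = x * h (Posz m.+1) + q ^+ m * s * h (Posz m).
Proof.
move=> H m; rewrite H.
have -> : (Posz m.+2 - 1 = Posz m.+1)%R by lia.
by have -> : (Posz m.+2 - 2 = Posz m)%R by lia.
Qed.

Lemma sol_uniq h1 h2 : sol h1 -> sol h2 -> h1 0 = h2 0 -> h1 1 = h2 1 ->
  forall n, h1 n = h2 n.
Proof.
move=> H1 H2 e0 e1.
have Hf : forall m : nat, h1 (Posz m) = h2 (Posz m) /\ h1 (Posz m.+1) = h2 (Posz m.+1).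
  elim=> [|m [IH1 IH2]]; first by split.
  by split=> //; rewrite (solP H1) (solP H2) IH1 IH2.
have Hb : forall m : nat, h1 (- Posz m) = h2 (- Posz m) /\ h1 (1 - Posz m) = h2 (1 - Posz m).
  elim=> [|m [IH1 IH2]]; first by split.
  have e : (1 - Posz m.+1 = - Posz m)%R by lia.
  split; last by rewrite e.
  have E1 := H1 (1 - Posz m); have E2 := H2 (1 - Posz m).
  have ea : (1 - Posz m - 1 = - Posz m)%R by lia.
  have eb : (1 - Posz m - 2 = - Posz m.+1)%R by lia.
  rewrite ea eb in E1 E2.
  have hc : q ^ (- Posz m.+1) * s != 0 by rewrite mulf_neq0 // expfz_neq0.
  apply: (mulfI hc).
  by apply: (addrI (x * h1 (- Posz m))); rewrite -E1 IH1 IH2 E2.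
case=> m; first by case: (Hf m).
by rewrite NegzE; case: (Hb m.+1).
Qed.

Lemma sol_lin a b h1 h2 : sol h1 -> sol h2 -> sol (fun n => a * h1 n + b * h2 n).
Proof.
move=> H1 H2 n /=; rewrite {1}(H1 n) {1}(H2 n); ring.
Qed.

Lemma sol_scale c h : sol h -> sol (fun n => c * h n).
Proof. by move=> H n /=; rewrite {1}(H n); ring. Qed.

Definition Cas (h1 h2 : int -> F) (m : nat) :=
  h1 (Posz m.+1) * h2 (Posz m) - h2 (Posz m.+1) * h1 (Posz m).

Definition cc (m : nat) := \prod_(0 <= t < m) (- (q ^+ t * s)).

Lemma cc_neq0 m : cc m != 0.
Proof.
rewrite /cc; elim: m => [|m IH]; first by rewrite big_geq ?oner_neq0.
rewrite big_nat_recr //= mulf_neq0 // oppr_eq0 mulf_neq0 // expf_neq0 //.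
Qed.

Lemma Cas_cc h1 h2 : sol h1 -> sol h2 -> forall m, Cas h1 h2 m = cc m * Cas h1 h2 0.
Proof.
move=> H1 H2; elim=> [|m IH]; first by rewrite /cc big_geq // mul1r.
rewrite /cc big_nat_recr //= -/(cc m) mulrAC -IH /Cas.
rewrite (solP H1) (solP H2); ring.
Qed.

End Sol.

Lemma sol_shift (F : fieldType) (q x s : F) (a : nat) : q != 0 -> s != 0 ->
  sol q x s (fun n => cfib q x (q ^+ a * s) (n - Posz a)).
Proof.
move=> hq hs n /=.
have hs' : q ^+ a * s != 0 by rewrite mulf_neq0 // expf_neq0.
rewrite (@cfib_rec F q x _ hq hs') mulrA -[q ^+ a]/(q ^ (Posz a)) -expfzDr //.
have -> : (n - Posz a - 2 + Posz a = n - 2)%R by lia.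
have -> : (n - Posz a - 1 = n - 1 - Posz a)%R by lia.
by have -> : (n - Posz a - 2 = n - 2 - Posz a)%R by lia.
Qed.

Lemma bin2E n : ('C(n, 2) * 2 + n = n * n)%N.
Proof.
elim: n => // n IH; rewrite binS bin1; nia.
Qed.

Lemma bin2Q n : ('C(n, 2))%:R = (n%:R * (n%:R - 1)) / 2 :> rat.
Proof.
have := bin2E n => /(congr1 (fun m => m%:R : rat)); rewrite !natrD !natrM => e.
apply: (mulIf (x := 2)); first by [].
rewrite divfK //; lra.
Qed.

Lemma nS n : (n.+1)%:R = n%:R + 1 :> rat.
Proof. by rewrite -addn1 natrD. Qed.

Definition Sb (j l : nat) := (\sum_(0 <= i < j.+1) 'C(i * l, 2))%N.

Lemma SbQ j l : (Sb j l)%:R = (l%:R ^+ 2 * j%:R * (j%:R + 1) * (2 * j%:R + 1)) / 12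
   - l%:R * j%:R * (j%:R + 1) / 4 :> rat.
Proof.
elim: j => [|j IH]; first by rewrite /Sb big_nat1 mul0n bin2Q; field => //.
rewrite /Sb big_nat_recr //= -/(Sb j l) natrD IH bin2Q natrM !nS; field => //.
Qed.

Lemma qexpE j l : (0 < l)%N -> (qexp j l + Sb j l = j * 'C(j * l, 2))%N.
Proof.
move=> hl.
have E : ((((4 * j + 1) * l - 3) * (l * 'C(j, 2))) + 6 * Sb j l = 6 * (j * 'C(j * l, 2)))%N.
  case: j => [|j]; first by rewrite /Sb big_nat1 !mul0n bin_small /= ?muln0.
  have h1 := bin2Q j.+1; have h2 := bin2Q (j.+1 * l); have h3 := SbQ j.+1 l.
  have hA : (3 <= (4 * j.+1 + 1) * l)%N by nia.
  move: ('C(j.+1, 2)) ('C(j.+1 * l, 2)) (Sb j.+1 l) h1 h2 h3 hA => c1 c2 S h1 h2 h3 hA.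
  apply/eqP; rewrite -(eqr_nat rat); apply/eqP.
  rewrite !natrD !natrM natrB // !natrM !natrD h1 h2 h3 natrM (nS j); field => //.
rewrite /qexp; lia.
Qed.

Lemma cc_mono (F : fieldType) (q s : F) m : cc q s m = (-1) ^+ m * q ^+ 'C(m, 2) * s ^+ m.
Proof.
elim: m => [|m IH]; first by rewrite /cc big_geq // !expr0 !mulr1.
rewrite /cc big_nat_recr //= -/(cc q s m) IH binS bin1 !exprS exprD; ring.
Qed.

Lemma mono (F : fieldType) (q s : F) j l : (0 < l)%N ->
  (-1) ^+ (j + l * 'C(j, 2)) * (q ^+ qexp j l * s ^+ (l * 'C(j, 2))) * (-1) ^+ j *
  \prod_(0 <= i < j.+1) cc q s (i * l) = (cc q s (j * l)) ^+ j.
Proof.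
move=> hl.
under eq_bigr do rewrite cc_mono.
rewrite !big_split /= !prodrXr.
have eS : (l * 'C(j, 2) + \sum_(0 <= i < j.+1) i * l = j * l * j)%N.
  rewrite -big_distrl /= bin2_sum binS bin1; have := bin2E j; nia.
have eQ : (qexp j l + \sum_(0 <= i < j.+1) 'C(i * l, 2) = 'C(j * l, 2) * j)%N.
  by rewrite -/(Sb j l) qexpE // mulnC.
have eN : (j + l * 'C(j, 2) + j + \sum_(0 <= i < j.+1) i * l = j * l * j + 2 * j)%N.
  by rewrite -eS; lia.
transitivity ((-1) ^+ (j + l * 'C(j, 2) + j + \sum_(0 <= i < j.+1) i * l) *
   q ^+ (qexp j l + \sum_(0 <= i < j.+1) 'C(i * l, 2)) *
   s ^+ (l * 'C(j, 2) + \sum_(0 <= i < j.+1) i * l)).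
  by rewrite !exprD; ring.
rewrite eN eQ eS cc_mono exprD (exprM (-1) 2) sqrrN expr1n expr1n mulr1 !exprMn !exprM. done.
Qed.

Section Lag.
Variables (F : fieldType) (a b : nat -> F) (w1 w2 : F).
Definition br i j := a i * b j - a j * b i.
Definition lin j := a j * w2 - w1 * b j.
Definition Dl lo N m := \sum_(lo <= j < lo + N) lin j ^+ m / \prod_(lo <= i < lo + N | i != j) br j i.
Definition good lo N := forall i j, (lo <= i < lo + N)%N -> (lo <= j < lo + N)%N -> i != j -> br i j != 0.

Lemma key_alg (bu lu lh lj p bjh bjl mm : F) : p != 0 -> bjh != 0 -> bjl != 0 ->
  bu * lj = lu * bjh - lh * bjl ->
  bu * (lj * mm / (p * bjh)) = lu * (mm / p) - lh * (mm / (p * bjh / bjl)).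
Proof.
move=> h1 h2 h3 e.
rewrite !mulrA e.
field; by rewrite h1 h2 h3.
Qed.

Lemma prodL1 (G : nat -> F) lo hi j : (lo <= hi)%N -> j != hi ->
  \prod_(lo <= i < hi.+1 | i != j) G i = (\prod_(lo <= i < hi | i != j) G i) * G hi.
Proof.
move=> h1 h2; rewrite big_mkcond big_nat_recr //= -big_mkcond /=.
by rewrite eq_sym h2.
Qed.

Lemma prodL2 (G : nat -> F) lo hi j : (lo < hi)%N -> j != lo ->
  \prod_(lo <= i < hi | i != j) G i = G lo * \prod_(lo.+1 <= i < hi | i != j) G i.
Proof.
by move=> h1 h2; rewrite big_ltn_cond // eq_sym h2.
Qed.

Lemma prod_good lo N lo' hi' j : good lo N -> (lo <= lo')%N -> (hi' <= lo + N)%N ->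
  (lo <= j < lo + N)%N -> \prod_(lo' <= i < hi' | i != j) br j i != 0.
Proof.
move=> G h1 h2 hj; rewrite prodf_seq_neq0; apply/allP => i; rewrite mem_index_iota => /andP[i1 i2].
apply/implyP => hij; apply: G; try lia; by rewrite eq_sym.
Qed.

Lemma Dl_rec lo N m : good lo N.+2 ->
  br lo (lo + N.+1) * Dl lo N.+2 m.+1 =
  lin lo * Dl lo N.+1 m - lin (lo + N.+1) * Dl lo.+1 N.+1 m.
Proof.
move=> G; set hi := (lo + N.+1)%N.
have e1 : (lo + N.+2 = hi.+1)%N by rewrite /hi addnS.
have e2 : (lo.+1 + N.+1 = hi.+1)%N by rewrite /hi addSn addnS.
rewrite /Dl e1 e2 -/hi.
have lohi : (lo < hi)%N by rewrite /hi; lia.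
have brn : br lo hi != 0 by apply: G; rewrite ?ltn_neqAle; try lia.
rewrite big_nat_recr /=; last lia.
rewrite big_ltn //.
rewrite (big_ltn lohi).
rewrite big_nat_recr /=; last lia.
set PS := fun j => \prod_(lo <= i < hi.+1 | i != j) br j i.
set P1 := fun j => \prod_(lo <= i < hi | i != j) br j i.
set P2 := fun j => \prod_(lo.+1 <= i < hi.+1 | i != j) br j i.
have nzP1 : forall j, (lo <= j < hi.+1)%N -> P1 j != 0.
  move=> j hj; apply: (prod_good (N := N.+2) G) => //; lia.
have nzP2 : forall j, (lo <= j < hi.+1)%N -> P2 j != 0.
  move=> j hj; apply: (prod_good (N := N.+2) G) => //; lia.
have nzbr : forall i j, (lo <= i < hi.+1)%N -> (lo <= j < hi.+1)%N -> i != j -> br i j != 0.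
  by move=> i j hi1 hj1 hij; apply: G => //; rewrite e1.
have EPS1 : forall j, (lo <= j < hi)%N -> PS j = P1 j * br j hi.
  move=> j hj; rewrite /PS /P1 prodL1 //; lia.
have EPS2 : forall j, (lo < j <= hi)%N -> PS j = br j lo * P2 j.
  move=> j hj; rewrite /PS /P2 prodL2 //; lia.
have Elo : br lo hi * (lin lo ^+ m.+1 / PS lo) = lin lo * (lin lo ^+ m / P1 lo).
  rewrite EPS1; last lia.
  have := nzP1 lo; have : (lo <= lo < hi.+1)%N by lia.
  move=> H /(_ H) h; rewrite exprS; field; rewrite h brn //.
have Ehi : br lo hi * (lin hi ^+ m.+1 / PS hi) = - (lin hi * (lin hi ^+ m / P2 hi)).
  rewrite EPS2; last lia.
  have := nzP2 hi; have : (lo <= hi < hi.+1)%N by lia.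
  move=> H /(_ H) h.
  have -> : br hi lo = - br lo hi by rewrite /br; ring.
  rewrite exprS; field; by rewrite ?h ?oppr_eq0 ?brn.
have Emid : br lo hi * \sum_(lo.+1 <= j < hi) (lin j ^+ m.+1 / PS j) =
   lin lo * \sum_(lo.+1 <= j < hi) (lin j ^+ m / P1 j) -
   lin hi * \sum_(lo.+1 <= j < hi) (lin j ^+ m / P2 j).
  rewrite !mulr_sumr -sumrB; apply: eq_big_nat => j hj.
  have h1 : P1 j != 0 by apply: nzP1; lia.
  have b1 : br j hi != 0 by apply: nzbr; lia.
  have b2 : br j lo != 0 by apply: nzbr; lia.
  have eP2 : P2 j = P1 j * br j hi / br j lo.
    by rewrite -EPS1; [rewrite EPS2; [field|lia]|lia].
  rewrite eP2 EPS1; last lia.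
  rewrite exprS; apply: key_alg => //.
  rewrite /lin /br; ring.
rewrite mulrDr mulrDr Elo Ehi Emid; ring.
Qed.

Lemma lagr_id m lo : good lo m.+2 -> Dl lo m.+2 m = 0.
Proof.
elim: m lo => [|m IH] lo G.
  have S2 : forall (H : nat -> F), \sum_(lo <= j < lo.+2) H j = H lo + H lo.+1.
    by move=> H; rewrite big_ltn // big_ltn // big_geq // addr0.
  have P2 : forall (H : nat -> F), \prod_(lo <= j < lo.+2) H j = H lo * H lo.+1.
    by move=> H; rewrite big_ltn // big_ltn // big_geq // mulr1.
  rewrite /Dl addn2 S2 !expr0.
  have n1 : (lo.+1 != lo) by rewrite eq_sym neq_ltn ltnSn.
  have n2 : (lo != lo.+1) by rewrite neq_ltn ltnSn.
  rewrite big_mkcond P2 big_mkcond P2 /= !eqxx n1 n2 /=.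
  have -> : br lo.+1 lo = - br lo lo.+1 by rewrite /br; ring.
  by rewrite !mul1r mulr1 invrN addrN.
have brn : br lo (lo + m.+2) != 0 by apply: G; try lia.
apply: (mulfI brn); rewrite Dl_rec // mulr0 IH ?IH; first by ring.
- move=> i j hi hj hij; apply: G => //; lia.
- move=> i j hi hj hij; apply: G => //; lia.
Qed.
End Lag.

Fixpoint fp (R : comNzRingType) (q x s : R) (m : nat) : R * R :=
  match m with
  | 0%N => (0, 1)
  | m'.+1 => let: (a, b) := fp q x s m' in (b, x * b + q ^+ m' * s * a)
  end.

Lemma cfib_pos_fp (F : fieldType) (q x s : F) m : cfib_pos q x s m = fp q x s m.
Proof. by elim: m => //= m ->. Qed.

Lemma fp_morph (R S : comNzRingType) (g : {rmorphism R -> S}) q x s m :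
  (g (fp q x s m).1, g (fp q x s m).2) = fp (g q) (g x) (g s) m.
Proof.
elim: m => [|m IH] /=; first by rewrite rmorph0 rmorph1.
case: (fp q x s m) IH => a b /= <- /=.
by rewrite rmorphD !rmorphM rmorphXn.
Qed.

Lemma fp_fib m : (0 <= (fp (1 : rat) 1 1 m).1) /\ (0 < (fp (1 : rat) 1 1 m).2).
Proof.
elim: m => [|m] /=; first by split.
case: (fp 1 1 1 m) => a b /= [ha hb]; split; first exact: ltW.
rewrite expr1n !mul1r; exact: ltr_wpDr.
Qed.

Lemma fp_fib_pos m : (0 < m)%N -> 0 < (fp (1 : rat) 1 1 m).1.
Proof.
case: m => // m _ /=; have := fp_fib m; case: (fp 1 1 1 m) => a b /= [].
done.
Qed.

Definition qp : R3 := 'X.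
Definition xp : R3 := (('X : {poly rat})%:P)%:P.
Definition sp : R3 := ('X : {poly {poly rat}})%:P.

Lemma ev1 (p : R3) : ((p.[1]).[1]).[1] = horner_eval 1 (horner_eval 1 (horner_eval 1 p)).
Proof. by []. Qed.

Lemma fpos_neq0 m a : (0 < m)%N -> f (Posz m) (Xq ^+ a * Xs) != 0.
Proof.
move=> hm; rewrite /f /cfib cfib_pos_fp.
have -> : Xq ^+ a * Xs = tofrac (qp ^+ a * sp) by rewrite tofracM tofracXn.
have -> : Xq = tofrac qp by [].
have -> : Xx = tofrac xp by [].
have H := fp_morph (@tofrac R3 : {rmorphism R3 -> QF}) qp xp (qp ^+ a * sp) m.
rewrite -H /= tofrac_eq0; apply/eqP => u0.
have h1 := fp_morph (horner_eval (1 : {poly {poly rat}})) qp xp (qp ^+ a * sp) m.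
rewrite u0 rmorph0 in h1.
have h2 := fp_morph (horner_eval (1 : {poly rat})) (horner_eval 1 qp) (horner_eval 1 xp) (horner_eval 1 (qp ^+ a * sp)) m.
rewrite -h1 /= rmorph0 in h2.
have h3 := fp_morph (horner_eval (1 : rat)) (horner_eval 1 (horner_eval 1 qp)) (horner_eval 1 (horner_eval 1 xp)) (horner_eval 1 (horner_eval 1 (qp ^+ a * sp))) m.
rewrite -h2 /= rmorph0 in h3.
have := fp_fib_pos hm.
rewrite /qp /xp /sp !rmorphM !rmorphXn /= in h3.
rewrite /horner_eval !hornerX !hornerC ?hornerX ?hornerC in h3.
rewrite expr1n mulr1 in h3.
by rewrite -h3 /= ltxx.
Qed.



Lemma prod_skip (F : fieldType) (G : nat -> F) lo hi j : (lo <= j < hi)%N ->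
  \prod_(lo <= i < hi | i != j) G i = (\prod_(lo <= i < j) G i) * \prod_(j.+1 <= i < hi) G i.
Proof.
move=> /andP[h1 h2].
rewrite (big_cat_nat _ (n := j)) //=; last exact: ltnW.
rewrite (big_ltn_cond (m := j)) // eqxx; congr (_ * _); rewrite big_mkcond; apply: eq_big_nat => i hi'.
- by rewrite ifT //; rewrite neq_ltn; apply/orP; left; lia.
- by rewrite ifT //; rewrite neq_ltn; apply/orP; right; lia.
Qed.

Lemma coef_alg (F : fieldType) (sg P D1 D2 Cj Plo Phi e1 e2 : F) :
  sg != 0 -> D1 != 0 -> D2 != 0 -> Plo != 0 -> Phi != 0 -> e1 != 0 ->
  sg * e1 * Plo = Cj ->
  sg * (P / (D1 * D2)) * ((D1 / Cj) * (e2 * D2 / Phi)) = P * e2 * e1^-1 / (Plo * Phi).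
Proof.
move=> h1 h2 h3 h4 h5 h6 <-; field.
by rewrite h1 h2 h3 h4 h5 h6.
Qed.

Section GMain.
Variables (F : fieldType) (q x s : F).
Hypotheses (hq : q != 0) (hs : s != 0).
Hypothesis hpos : forall m a, (0 < m)%N -> cfib q x (q ^+ a * s) (Posz m) != 0.
Variables (k l : nat).
Hypothesis hl : (0 < l)%N.

Definition hh (j : nat) : int -> F := fun n => cfib q x (q ^+ (j * l) * s) (n - Posz (j * l)).
Definition F0 (n : int) := cfib q x s n.
Definition G0 (n : int) := s * cfib q x (q * s) (n - Posz 1).
Definition V (j i : nat) := cfib q x (q ^+ (j * l) * s) (Posz ((i - j) * l)).

Lemma sol_hh j : sol q x s (hh j).
Proof. exact: (sol_shift x (j * l) hq hs). Qed.

Lemma sol_F0 : sol q x s F0.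
Proof. move=> n; exact: (cfib_rec x hq hs). Qed.

Lemma sol_G0 : sol q x s G0.
Proof.
have := sol_scale s (sol_shift x 1 hq hs); rewrite expr1 => H.
move=> n; rewrite /G0; move: (H n) => /= ->; done.
Qed.

Lemma cf0 t : cfib q x t 0 = 0. Proof. by []. Qed.
Lemma cf1 t : cfib q x t 1 = 1. Proof. by []. Qed.

Lemma G00 : G0 0 = 1.
Proof.
rewrite /G0 (_ : (0 - Posz 1 = Negz 0 :> int)) //.
have -> : cfib q x (q * s) (Negz 0) = (1 - x * 0) / (q ^ (Negz 0) * (q * s)) by [].
change (q ^ (Negz 0)) with ((q ^+ 1)^-1).
rewrite expr1; field; by rewrite hq hs.
Qed.

Lemma hh_dec j n : hh j n = hh j 1 * F0 n + hh j 0 * G0 n.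
Proof.
apply: (sol_uniq hq hs (sol_hh j) (sol_lin _ _ sol_F0 sol_G0)).
- by rewrite /F0 cf0 G00 mulr0 add0r mulr1.
- rewrite /F0 /G0 cf1 (_ : (1 - Posz 1 = 0 :> int)) // cf0; ring.
Qed.

Lemma hh_self j : hh j (Posz (j * l)) = 0.
Proof. by rewrite /hh subrr cf0. Qed.

Lemma hh_selfS j : hh j (Posz (j * l).+1) = 1.
Proof. by rewrite /hh (_ : (Posz (j * l).+1 - Posz (j * l) = 1)) ?cf1 //; lia. Qed.

Lemma hh_V j i : (j <= i)%N -> hh j (Posz (i * l)) = V j i.
Proof.
move=> hji; rewrite /hh /V; congr cfib.
have : (j * l <= i * l)%N by rewrite leq_mul2r hji orbT.
rewrite mulnBl; lia.
Qed.

Lemma V_neq0 j i : (j < i)%N -> V j i != 0.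
Proof. move=> h; apply: hpos; rewrite muln_gt0 hl subn_gt0 h //. Qed.

Definition aa j := hh j 1.
Definition bb j := hh j 0.

Lemma br_Cas j i : br aa bb j i = Cas (hh j) (hh i) 0.
Proof. by []. Qed.

Lemma br_gt j i : (j < i)%N -> br aa bb j i = - V j i / cc q s (i * l).
Proof.
move=> hji; have := Cas_cc hq hs (sol_hh j) (sol_hh i) (i * l).
rewrite -br_Cas /Cas hh_self hh_selfS hh_V; last exact: ltnW.
move=> e; have hc := cc_neq0 hq hs (i * l).
rewrite (_ : - V j i = cc q s (i * l) * br aa bb j i); last by rewrite -e; ring.
by rewrite mulrC mulKf.
Qed.

Lemma br_lt j i : (i < j)%N -> br aa bb j i = V i j / cc q s (j * l).
Proof.
move=> hij; have := Cas_cc hq hs (sol_hh j) (sol_hh i) (j * l).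
rewrite -br_Cas /Cas hh_self hh_selfS hh_V; last exact: ltnW.
move=> e; have hc := cc_neq0 hq hs (j * l).
rewrite (_ : V i j = cc q s (j * l) * br aa bb j i); last by rewrite -e; ring.
by rewrite mulrC mulKf.
Qed.

Lemma good_all N : good aa bb 0 N.
Proof.
move=> i j _ _ hij; case: (ltngtP i j) => h.
- rewrite br_gt // mulf_neq0 ?oppr_eq0 ?V_neq0 ?invr_eq0 ?cc_neq0 //.
- rewrite br_lt // mulf_neq0 ?V_neq0 ?invr_eq0 ?cc_neq0 //.
- by rewrite h eqxx in hij.
Qed.

Lemma lin_hh n j : lin aa bb (- G0 n) (F0 n) j = hh j n.
Proof. rewrite /lin hh_dec /aa /bb; ring. Qed.

Definition Bj j := \prod_(0 <= i < k.+2 | i != j) br aa bb j i.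
Definition D1 j := \prod_(1 <= i < j.+1) cfib q x (q ^+ ((j - i) * l) * s) (Posz (i * l)).
Definition D2 j := \prod_(1 <= i < (k.+1 - j).+1) cfib q x (q ^+ (j * l) * s) (Posz (i * l)).

Lemma D1_V j : \prod_(0 <= i < j) V i j = D1 j.
Proof.
rewrite /D1 big_add1 /= big_nat_rev /=; apply: eq_big_nat => i hi.
rewrite /V add0n; congr (cfib _ _ (_ ^+ (_ * _) * _) (Posz (_ * _))); lia.
Qed.

Lemma D2_V j : (j <= k.+1)%N -> \prod_(j.+1 <= i < k.+2) V j i = D2 j.
Proof.
move=> hj; rewrite /D2 -add1n big_addn -subSn //; apply: eq_big_nat => i hi.
by rewrite /V addnK.
Qed.

Lemma D1_neq0 j : D1 j != 0.
Proof.
rewrite -D1_V prodf_seq_neq0; apply/allP => i; rewrite mem_index_iota => hi.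
by apply/implyP => _; apply: V_neq0; lia.
Qed.

Lemma D2_neq0 j : (j <= k.+1)%N -> D2 j != 0.
Proof.
move=> hj; rewrite -D2_V // prodf_seq_neq0; apply/allP => i; rewrite mem_index_iota => hi.
by apply/implyP => _; apply: V_neq0; lia.
Qed.

Lemma prodcc_neq0 lo hi : \prod_(lo <= i < hi) cc q s (i * l) != 0.
Proof.
rewrite prodf_seq_neq0; apply/allP => i _; apply/implyP => _; exact: cc_neq0.
Qed.

Lemma Bj_val j : (j < k.+2)%N ->
  Bj j = (D1 j / cc q s (j * l) ^+ j) *
         ((-1) ^+ (k.+1 - j) * D2 j / \prod_(j.+1 <= i < k.+2) cc q s (i * l)).
Proof.
move=> hj; rewrite /Bj prod_skip; last by rewrite hj.
congr (_ * _).
- rewrite [LHS](eq_big_nat _ _ (F2 := fun i => V i j / cc q s (j * l))); last first.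
    by move=> i hi; rewrite br_lt //; lia.
  by rewrite prodf_div prodr_const_nat subn0 D1_V.
- rewrite [LHS](eq_big_nat _ _ (F2 := fun i => (-1) * (V j i / cc q s (i * l)))); last first.
    by move=> i hi; rewrite br_gt; [rewrite mulN1r mulNr | lia].
  rewrite big_split /= prodr_const_nat prodf_div D2_V; last lia.
  by rewrite subSS mulrA.
Qed.

Definition sgn_c j := (-1) ^+ (j + l * 'C(j, 2)) * (q ^+ qexp j l * s ^+ (l * 'C(j, 2))).
Definition Pk := \prod_(1 <= i < k.+2) cfib q x s (Posz (i * l)).
Definition Const := Pk * (-1) ^+ k.+1 / \prod_(0 <= i < k.+2) cc q s (i * l).

Lemma coef_val j : (j < k.+2)%N -> sgn_c j * (Pk / (D1 j * D2 j)) * Bj j = Const.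
Proof.
move=> hj; rewrite Bj_val // (@coef_alg F _ _ _ _ _ (\prod_(0 <= i < j.+1) cc q s (i * l)) _ ((-1) ^+ j)).
- rewrite invr_sign /Const -(mulrA Pk) -exprD subnK; last lia.
  by rewrite -big_cat_nat.
- by rewrite /sgn_c mulf_neq0 ?signr_eq0 ?mulf_neq0 ?expf_neq0.
- exact: D1_neq0.
- by apply: D2_neq0; lia.
- exact: prodcc_neq0.
- exact: prodcc_neq0.
- by rewrite signr_eq0.
- exact: mono.
Qed.

Lemma gen_main n :
  \sum_(0 <= j < k.+2) sgn_c j * (Pk / (D1 j * D2 j)) * hh j n ^+ k = 0.
Proof.
have L := lagr_id (- G0 n) (F0 n) (@good_all k.+2).
rewrite /Dl add0n in L.
rewrite -[RHS](mulr0 Const) -[in RHS]L mulr_sumr; apply: eq_big_nat => j hj.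
have hB : Bj j != 0.
  by apply: (prod_good (@good_all k.+2)) => //; lia.
rewrite lin_hh -(coef_val hj) -/(Bj j).
by rewrite -!mulrA [Bj j * _]mulrC divfK.
Qed.

End GMain.



Lemma XqN : Xq != 0.
Proof. by rewrite /Xq tofrac_eq0 polyX_eq0. Qed.
Lemma XsN : Xs != 0.
Proof. by rewrite /Xs tofrac_eq0 polyC_eq0 polyX_eq0. Qed.



Theorem theorem3 (k l : nat) (hk : (0 < k)%N) (hl : (0 < l)%N) (n : int) :
  \sum_(0 <= j < k.+2)
     (-1) ^+ (j + l * 'C(j, 2)) * (Xq ^+ qexp j l * Xs ^+ (l * 'C(j, 2)))
     * qbrack k.+1 j l * f (n - ((j * l)%N)%:Z) (Xq ^+ (j * l) * Xs) ^+ k = 0.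
Proof.
have hpos : forall m a, (0 < m)%N -> cfib Xq Xx (Xq ^+ a * Xs) (Posz m) != 0.
  by move=> m a h; exact: (fpos_neq0 a h).
exact: (gen_main XqN XsN hpos k hl n).
Qed.
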